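(* Let $\mathbb{X}=\mathbb{X}(p_1,p_2,p_3)$ be a weighted projective line with $\chi_{\mathbb{X}}<0$, and let $\mathcal{S}=\{\vec{x}\in\mathbb{L}\mid 0\leq\vec{x}\leq n\vec{\omega}+\vec{c}\text{ for all integers }n\geq 2\}$. If $a\vec{x}_i\in\mathcal{S}$ for some integer $a>0$ and some $1\leq i\leq 3$, then $(p_i-a+j)\vec{\omega}>0$ for every $1\leq j\leq a$.
   Context: $\mathbb{L}=\mathbb{L}(p_1,p_2,p_3)$ ($p_i\geq 2$) is the abelian group generated by $\vec{x}_1,\vec{x}_2,\vec{x}_3$ with $p_1\vec{x}_1=p_2\vec{x}_2=p_3\vec{x}_3=:\vec{c}$; $\vec{x}\geq\vec{y}$ means $\vec{x}-\vec{y}$ is a nonnegative integer combination of $\vec{x}_1,\vec{x}_2,\vec{x}_3$, and $\vec{x}>\vec{y}$ means $\vec{x}\geq\vec{y}$ and $\vec{x}\neq\vec{y}$. $\vec{\omega}=\vec{c}-\sum_i\vec{x}_i$ and $\chi_{\mathbb{X}}=2-\sum_{i=1}^3(1-1/p_i)$. *)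

(* Defs.v *)
From mathcomp Require Import all_boot all_order all_algebra.
Set Implicit Arguments. Unset Strict Implicit. Unset Printing Implicit Defensive.
Import Order.TTheory GRing.Theory Num.Theory.
Local Open Scope ring_scope.

(* The string group L(p_1,p_2,p_3) presented as Z^3 (coefficients of
   x_1,x_2,x_3, indexed by 'I_3) modulo the subgroup generated by
   p_1 e_1 - p_2 e_2 and p_2 e_2 - p_3 e_3.  An element of L is represented by
   any integer triple; [Leq p u v] is equality in L. *)
Definition Lvec := 'I_3 -> int.

Definition Leq (p : 'I_3 -> nat) (u v : Lvec) : Prop :=
  exists t : 'I_3 -> int,
    (forall i, u i - v i = t i * (p i)%:Z) /\ \sum_(i < 3) t i = 0.

Definition Lsub (u v : Lvec) : Lvec := fun i => u i - v i.
Definition Lzero : Lvec := fun _ => 0.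
Definition Lscale (k : int) (u : Lvec) : Lvec := fun i => k * u i.

Definition Lge (p : 'I_3 -> nat) (x y : Lvec) : Prop :=
  exists n : 'I_3 -> nat, Leq p (Lsub x y) (fun i => (n i)%:Z).

Definition Lgt (p : 'I_3 -> nat) (x y : Lvec) : Prop :=
  Lge p x y /\ ~ Leq p x y.

Definition Lx (i : 'I_3) : Lvec := fun j => if j == i then 1 else 0.
Definition Lc (p : 'I_3 -> nat) : Lvec := Lscale (p ord0)%:Z (Lx ord0).
(* omega = c - x_1 - x_2 - x_3 *)
Definition Lomega (p : 'I_3 -> nat) : Lvec := fun j => Lc p j - 1.

Definition Ladd (u v : Lvec) : Lvec := fun i => u i + v i.

Definition inS (p : 'I_3 -> nat) (x : Lvec) : Prop :=
  Lge p x Lzero /\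
  forall n : int, 2 <= n -> Lge p (Ladd (Lscale n (Lomega p)) (Lc p)) x.

Definition chiX (p : 'I_3 -> nat) : rat :=
  2 - \sum_(i < 3) (1 - ((p i)%:R)^-1).

(* Main.v *)
Require Import Defs.
From mathcomp Require Import all_boot all_order all_algebra zify ring lra.
Import Order.TTheory GRing.Theory Num.Theory.
Local Open Scope ring_scope.

Lemma ge_iff p x y (hp : forall j, (0 < p j)%N) :
  Lge p x y <-> 0 <= \sum_(j < 3) ((x j - y j) %/ (p j)%:Z)%Z.
Proof.
split.
  move=> [n [t [ht hs]]]; apply: (le_trans (_ : 0 <= \sum_(j < 3) t j)); first by rewrite hs.
  apply: ler_sum => j _.
  rewrite lez_divRL ?ltz_nat //; have := ht j; rewrite /Lsub; lia.
move=> hs.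
pose f := fun j => ((x j - y j) %/ (p j)%:Z)%Z.
pose s := \sum_(j < 3) f j.
pose t := fun j : 'I_3 => f j - (if j == ord0 then s else 0).
have tle : forall j, t j * (p j)%:Z <= x j - y j.
  move=> j; have hpj := hp j; have hne : (p j)%:Z != 0 by rewrite eqz_nat -lt0n.
  have := lez_floor (x j - y j) hne.
  have : 0 <= (if j == ord0 then s else 0) by case: (j == ord0).
  rewrite /t /f; nia.
exists (fun j => absz (x j - y j - t j * (p j)%:Z)%R), t; split.
  move=> j; rewrite /Lsub gez0_abs; first by ring.
  by rewrite subr_ge0.
rewrite /t sumrB -/s (bigD1 ord0) //= big1 ?addr0 ?subrr // => j /negbTE -> //.
Qed.

Lemma sum_ind (x : 'I_3) (v : int) : \sum_(m < 3) (if m == x then v else 0) = v.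
Proof. by rewrite (bigD1 x) //= eqxx big1 ?addr0 // => m /negbTE ->. Qed.

Lemma termS p (hp : forall j, (0 < p j)%N) (n e : int) m :
  ((Ladd (Lscale n (Lomega p)) (Lc p) m - e) %/ (p m)%:Z)%Z =
  (if m == ord0 then n + 1 else 0) + ((- n - e) %/ (p m)%:Z)%Z.
Proof.
have hne : (p m)%:Z != 0 by rewrite eqz_nat -lt0n.
rewrite /Ladd /Lscale /Lomega /Lc /Lscale /Lx; case: eqP => [->|_].
  rewrite -divzMDl; last by rewrite eqz_nat -lt0n.
  by congr (divz _ _); ring.
by rewrite add0r; congr (divz _ _); ring.
Qed.

Lemma termK p (hp : forall j, (0 < p j)%N) (n : int) m :
  ((Lscale n (Lomega p) m - Lzero m) %/ (p m)%:Z)%Z =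
  (if m == ord0 then n else 0) + ((- n) %/ (p m)%:Z)%Z.
Proof.
have hne : (p m)%:Z != 0 by rewrite eqz_nat -lt0n.
rewrite /Lzero /Lscale /Lomega /Lc /Lscale /Lx; case: eqP => [->|_].
  rewrite -divzMDl; last by rewrite eqz_nat -lt0n.
  by congr (divz _ _); ring.
by rewrite add0r; congr (divz _ _); ring.
Qed.

Lemma Lx_val (a : int) i m : Lscale a (Lx i) m = if m == i then a else 0.
Proof. by rewrite /Lscale /Lx; case: eqP => _; rewrite ?mulr1 ?mulr0. Qed.

Lemma not_zero p (hp : forall j, (2 <= p j)%N) (hchi : chiX p < 0) (k : int)
  (hk : 0 < k) : ~ Leq p (Lscale k (Lomega p)) Lzero.
Proof.
move=> [t [ht hs]].
move: hchi hs; rewrite /chiX !big_ord_recl !big_ord0 /= => hchi hs.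
have h0 := ht ord0.
have h1 := ht (lift ord0 ord0).
have h2 := ht (lift ord0 (lift ord0 ord0)).
move: h0 h1 h2; rewrite /Lscale /Lomega /Lc /Lscale /Lx /Lzero /= => h0 h1 h2.
set P0 := p ord0 in hchi h0 h1 h2.
set P1 := p (lift ord0 ord0) in hchi h1.
set P2 := p (lift ord0 (lift ord0 ord0)) in hchi h2.
set T0 := t ord0 in hs h0; set T1 := t (lift ord0 ord0) in hs h1.
set T2 := t (lift ord0 (lift ord0 ord0)) in hs h2.
have g0 : (2 <= P0)%N by apply: hp.
have g1 : (2 <= P1)%N by apply: hp.
have g2 : (2 <= P2)%N by apply: hp.
have ineq : (P1 * P2 + P0 * P2 + P0 * P1 < P0 * P1 * P2)%N.
  rewrite -(ltr_nat rat) !natrD !natrM.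
  have n0 : (P0%:R : rat) != 0 by rewrite pnatr_eq0 -lt0n; apply: leq_trans g0.
  have n1 : (P1%:R : rat) != 0 by rewrite pnatr_eq0 -lt0n; apply: leq_trans g1.
  have n2 : (P2%:R : rat) != 0 by rewrite pnatr_eq0 -lt0n; apply: leq_trans g2.
  have pos : (0 : rat) < P0%:R * P1%:R * P2%:R.
    rewrite -!natrM ltr0n !muln_gt0; lia.
  have E : (P0%:R * P1%:R * P2%:R : rat) * (2 - (1 - P0%:R^-1 + (1 - P1%:R^-1 + (1 - P2%:R^-1 + 0))))
     = P1%:R * P2%:R + P0%:R * P2%:R + P0%:R * P1%:R - P0%:R * P1%:R * P2%:R.
    by field; rewrite n0 n1 n2.
  have : (P0%:R * P1%:R * P2%:R : rat) * (2 - (1 - P0%:R^-1 + (1 - P1%:R^-1 + (1 - P2%:R^-1 + 0)))) < 0.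
    by rewrite pmulr_rlt0.
  by rewrite E subr_lt0.
have hz : (T0 + T1 + T2) * (P0%:Z * P1%:Z * P2%:Z) = 0.
  by rewrite (_ : T0 + T1 + T2 = 0) ?mul0r //; lia.
have hz2 : k * ((P0%:Z * P1%:Z * P2%:Z) - (P1%:Z * P2%:Z + P0%:Z * P2%:Z + P0%:Z * P1%:Z)) = 0.
  rewrite -hz.
  have -> : (T0 + T1 + T2) * (P0%:Z * P1%:Z * P2%:Z) =
    (T0 * P0%:Z) * (P1%:Z * P2%:Z) + (T1 * P1%:Z) * (P0%:Z * P2%:Z) + (T2 * P2%:Z) * (P0%:Z * P1%:Z) by ring.
  rewrite -h0 -h1 -h2; ring.
move: hz2 => /eqP; rewrite mulf_eq0 => /orP [/eqP|/eqP]; first by lia.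
lia.
Qed.

Theorem lemma5p2 (p : 'I_3 -> nat) (hp : forall i, (2 <= p i)%N)
  (hchi : chiX p < 0) (a : nat) (i : 'I_3) (ha : (0 < a)%N)
  (hS : inS p (Lscale a%:Z (Lx i))) :
  forall j : nat, (1 <= j <= a)%N ->
    Lgt p (Lscale ((p i)%:Z - a%:Z + j%:Z) (Lomega p)) Lzero.
Proof.
move=> j /andP [j1 ja].
have hp0 : forall m, (0 < p m)%N by move=> m; apply: leq_trans (hp m).
have hpz : forall m, 0 < (p m)%:Z by move=> m; rewrite ltz_nat.
set k : int := (p i)%:Z - a%:Z + j%:Z.
have hyp : forall n : int, 2 <= n ->
    0 <= (n + 1) + \sum_(m < 3) ((- n - (if m == i then a%:Z else 0)) %/ (p m)%:Z)%Z.
  move=> n hn; have := (proj2 hS) n hn; rewrite ge_iff //.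
  under eq_bigr => m _ do rewrite Lx_val termS //.
  by rewrite big_split /= sum_ind.
have k2 : 2 <= k.
  rewrite leNgt; apply/negP => hk.
  have := hyp 2 (lexx _).
  have : \sum_(m < 3) ((- 2 - (if m == i then a%:Z else 0)) %/ (p m)%:Z)%Z
     <= \sum_(m < 3) (-1 - (if m == i then 1 else 0)).
    apply: ler_sum => m _.
    rewrite -ltzD1 ltz_divLR //.
    case: eqP => [->|_]; last by lia.
    rewrite /k in hk; lia.
  rewrite sumrB sum_ind sumr_const card_ord.
  have -> : (-1 : int) *+ 3 = -3 by [].
  move=> A B; have := lerD (lexx 3) A; move: B; set S := \sum_(m < 3) _. lia.
split; last by apply: not_zero => //; lia.
rewrite ge_iff //.
under eq_bigr => m _ do rewrite termK //.
rewrite big_split /= sum_ind.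
have := hyp k k2.
have : \sum_(m < 3) ((- k - (if m == i then a%:Z else 0)) %/ (p m)%:Z)%Z + 1
     <= \sum_(m < 3) ((- k) %/ (p m)%:Z)%Z.
  rewrite -[X in _ + X <= _](sum_ind i) -big_split /=.
  apply: ler_sum => m _.
  case: eqP => [->|_]; last by rewrite subr0 addr0.
  have A : -1 <= ((- k) %/ (p i)%:Z)%Z by rewrite lez_divRL //; rewrite /k; lia.
  have B : ((- k - a%:Z) %/ (p i)%:Z)%Z < -1 by rewrite ltz_divLR //; rewrite /k; lia.
  lia.
move=> A B; have := lerD (lexx k) A; move: B; set S := \sum_(m < 3) ((- k - _) %/ _)%Z; set S2 := \sum_(m < 3) _. lia.
Qed.
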